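(* Let $A=(i_1,\dots,i_a)$ be an ordered tuple of distinct elements of $I_d$ and $r\ge0$ with $(a-1)l+r$ even. Let $\overrightarrow{A}=(i_a,i_1,\dots,i_{a-1})$. Then $\overrightarrow{A}^{(r)}=A^{(r)}$ in $\mathcal{G}$.
   Context: Fix a commutative ring $R$ and integers $l,d\ge1$; $I_a=\{1,\dots,a\}$. Let $\mathcal{G}$ be the $R$-superalgebra that is free as an $R$-module with basis $\{x_1^{m_1}\cdots x_d^{m_d}\,w\,c_1^{e_1}\cdots c_d^{e_d}: 0\le m_i\le l-1,\ w\in\Sigma_d,\ e_i\in\{0,1\}\}$, with multiplication determined by: the $x_i$ commute and $x_i^l=0$; $w\in\Sigma_d$ multiply as in the symmetric group (composition right to left); $c_i^2=1$, $c_ic_j=-c_jc_i$ for $i\ne j$; $wx_i=x_{w(i)}w$, $wc_i=c_{w(i)}w$; $x_ic_i=-c_ix_i$, $x_ic_j=c_jx_i$ for $i\ne j$ (this is $\operatorname{gr}$ of a level-$l$ cyclotomic Sergeev superalgebra). For an ordered tuple $A=(i_1,\dots,i_a)$ of distinct elements of $I_d$, $\sigma_A$ is the cycle $i_1\mapsto i_2\mapsto\dots\mapsto i_a\mapsto i_1$. For $\alpha\in\mathbb{Z}_2^a$: $|\alpha|=\sum_j\alpha_j$; $\mathbb{Z}_2^{a,\mathrm{ev}}$ is the set of $\alpha$ with $|\alpha|$ even; $c_\alpha(A)=c_{i_1}^{\alpha_1}\cdots c_{i_a}^{\alpha_a}$; $\epsilon^\alpha_j=\prod_{k<j}(-1)^{\alpha_k}$.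 For $r\ge0$, $\alpha\in\mathbb{Z}_2^{a,\mathrm{ev}}$: $h^\alpha_r(A)=\sum_{r_1+\dots+r_a=(a-1)(l-1)+r,\ r_j\ge0}\prod_j(\epsilon^\alpha_jx_{i_j})^{r_j}$, $A^{(r,\alpha)}=h^\alpha_r(A)\sigma_Ac_\alpha(A)$, $\tau_\alpha=(-1)^{|\alpha|/2+\sum_j j\alpha_j}$, and $A^{(r)}=\sum_{\alpha\in\mathbb{Z}_2^{a,\mathrm{ev}}}\tau_\alpha A^{(r,\alpha)}$. *)

(* Defs.v *)
(* Concrete construction of the graded cyclotomic Sergeev
   superalgebra  G = gr(...)  as the free R-module {ffun basisG d l -> R}
   on the basis  x^m w c^e , with multiplication defined by the relations. *)
From HB Require Import structures.
From mathcomp Require Import all_boot all_order all_algebra all_fingroup.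
Set Implicit Arguments. Unset Strict Implicit. Unset Printing Implicit Defensive.
Import GRing.Theory.
Local Open Scope ring_scope.

Section SergeevGr.
Variables (R : comPzRingType) (d l : nat).

(* Indices I_d are represented (0-based) by 'I_d.
   A basis element (m, w, e) stands for
   x_1^{m_1} ... x_d^{m_d} w c_1^{e_1} ... c_d^{e_d},  0 <= m_i <= l-1. *)
Definition basisG := ({ffun 'I_d -> 'I_l} * {perm 'I_d} * {ffun 'I_d -> bool})%type.

(* Elements of G: R-linear combinations of basis elements (coordinates).
   WARNING: the ring structure that mathcomp puts on ffuns is pointwise and is
   never used; the product of G is [mulG] below. *)
Definition G := {ffun basisG -> R^o}.
HB.instance Definition _ := GRing.Lmodule.copy G {ffun basisG -> R^o}.

Definition deltaG (b : basisG) : G := [ffun b' => (b' == b)%:R].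

Definition oneG : G :=
  [ffun b : basisG => ([forall i, b.1.1 i == 0%N :> nat] && (b.1.2 == 1%g)
                        && (b.2 == [ffun=> false]))%:R].

Definition linG (phi : basisG -> G) (f : G) : G := \sum_b f b *: phi b.

Definition incr_exp (m : {ffun 'I_d -> 'I_l}) (k : 'I_d) : option {ffun 'I_d -> 'I_l} :=
  match insub (m k).+1 : option 'I_l with
  | Some n => Some [ffun i => if i == k then n else m i]
  | None => None
  end.

(* right multiplication of a basis element by x_j:
   x^m w c^e x_j = (-1)^{e_j} x^m x_{w(j)} w c^e   (zero if the exponent reaches l) *)
Definition rx_basis (j : 'I_d) (b : basisG) : G :=
  let: (m, w, e) := b in
  match incr_exp m (w j) with
  | Some m' => (- 1) ^+ (e j) *: deltaG (m', w, e)
  | None => 0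
  end.

(* right multiplication of a basis element by c_k:
   c^e c_k = (-1)^{#{j > k | e_j}} c^{e + delta_k} *)
Definition rc_basis (k : 'I_d) (b : basisG) : G :=
  let: (m, w, e) := b in
  (- 1) ^+ #|[pred j : 'I_d | (k < j)%N && e j]|
    *: deltaG (m, w, [ffun i => if i == k then ~~ e i else e i]).

Definition rx (j : 'I_d) (f : G) : G := linG (rx_basis j) f.
Definition rc (k : 'I_d) (f : G) : G := linG (rc_basis k) f.

(* right multiplication of a basis element by a permutation s:
   x^m w c^e s = x^m (w s) c_{s^-1(k_1)} ... c_{s^-1(k_t)}, where k_1 < ... < k_t
   are the k with e_k = 1 (using c_k s = s c_{s^-1(k)}).
   Composition in Sigma_d is right to left: (w s)(i) = w (s i); in mathcomp
   this is the permutation (s * w)%g since (s * w)%g i = w (s i). *)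
Definition rw_basis (s : {perm 'I_d}) (b : basisG) : G :=
  let: (m, w, e) := b in
  foldl (fun g k => rc (s^-1 k)%g g) (deltaG (m, (s * w)%g, [ffun=> false]))
        [seq k <- enum 'I_d | e k].

Definition rw (s : {perm 'I_d}) (f : G) : G := linG (rw_basis s) f.

(* f * (x^m' w' c^e') = (((f x^m') w') c^e') *)
Definition rmul_basis (b : basisG) (f : G) : G :=
  let: (m', w', e') := b in
  let f1 := foldl (fun h j => iter (m' j) (rx j) h) f (enum 'I_d) in
  let f2 := rw w' f1 in
  foldl (fun h k => rc k h) f2 [seq k <- enum 'I_d | e' k].

Definition mulG (f g : G) : G := \sum_b g b *: rmul_basis b f.

Definition prodG (s : seq G) : G := foldr mulG oneG s.
Definition powG (f : G) (n : nat) : G := iter n (fun h => mulG h f) oneG.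

Definition xG (i : 'I_d) : G := rx i oneG.
Definition cG (i : 'I_d) : G := rc i oneG.
Definition wG (s : {perm 'I_d}) : G := rw s oneG.

Definition cyc_fun (A : seq 'I_d) (x : 'I_d) : 'I_d := if uniq A then next A x else x.

Lemma cyc_fun_inj (A : seq 'I_d) : injective (cyc_fun A).
Proof.
rewrite /cyc_fun; case: (boolP (uniq A)) => uA //.
exact: (can_inj (prev_next uA)).
Qed.

Definition sigmaA (A : seq 'I_d) : {perm 'I_d} := perm (@cyc_fun_inj A).

Section Tuple.
Variable (A : seq 'I_d).
Local Notation a := (size A).
Local Notation iA j := (tnth (in_tuple A) j).

Definition absZ2 (al : {ffun 'I_a -> bool}) : nat := (\sum_(j < a) al j)%N.

Definition epsA (al : {ffun 'I_a -> bool}) (j : 'I_a) : R :=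
  \prod_(k < a | (k < j)%N) (- 1) ^+ al k.

Definition calpha (al : {ffun 'I_a -> bool}) : G :=
  prodG [seq (if al j then cG (iA j) else oneG) | j <- enum 'I_a].

Definition hA (r : nat) (al : {ffun 'I_a -> bool}) : G :=
  let N := (a.-1 * l.-1 + r)%N in
  \sum_(t : {ffun 'I_a -> 'I_N.+1} | (\sum_(j < a) t j)%N == N)
     prodG [seq powG (epsA al j *: xG (iA j)) (t j) | j <- enum 'I_a].

Definition Aralpha (r : nat) (al : {ffun 'I_a -> bool}) : G :=
  mulG (mulG (hA r al) (wG (sigmaA A))) (calpha al).

(* tau_alpha = (-1)^{|alpha|/2 + sum_j j alpha_j}, j 1-based *)
Definition tauA (al : {ffun 'I_a -> bool}) : R :=
  (- 1) ^+ ((absZ2 al)./2 + \sum_(j < a) j.+1 * al j)%N.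

Definition Ar (r : nat) : G :=
  \sum_(al : {ffun 'I_a -> bool} | ~~ odd (absZ2 al)) tauA al *: Aralpha r al.

End Tuple.
End SergeevGr.

(* Main.v *)
Require Import Defs.
From HB Require Import structures.
From mathcomp Require Import all_boot all_order all_algebra all_fingroup.
From mathcomp Require Import ring zify.
Set Implicit Arguments. Unset Strict Implicit. Unset Printing Implicit Defensive.
Import GRing.Theory.

Local Open Scope ring_scope.
Local Open Scope ring_scope.

Section Lin.
Variables (R : comPzRingType) (d l : nat).
Local Notation G := (G R d l).
Local Notation basisG := (basisG d l).

Lemma GZ (k : R) (f : G) b : (k *: f) b = k * f b.
Proof. by rewrite ffunE. Qed.
Lemma GD (f g : G) b : (f + g) b = f b + g b.
Proof. by rewrite ffunE. Qed.

Definition scal (F : G -> G) := forall k f, F (k *: f) = k *: F f.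

Lemma linG_scal phi : scal (linG phi).
Proof.
move=> k f; rewrite /linG scaler_sumr; apply: eq_bigr => b _.
by rewrite GZ scalerA.
Qed.

Lemma scal_iter F n : scal F -> scal (iter n F).
Proof. by move=> sF k f; elim: n => //= n ->; rewrite sF. Qed.

Lemma scal_foldl (T : Type) (F : G -> T -> G) s :
  (forall t, scal (F^~ t)) -> scal (fun f => foldl F f s).
Proof.
move=> sF; elim: s => //= t s IH k f; by rewrite sF IH.
Qed.

Lemma rmul_scal b : scal (rmul_basis b).
Proof.
case: b => [[m w] e] k f /=.
rewrite (scal_foldl (F := fun h j => iter (m j) (rx j) h)); last first.
  by move=> t; apply: scal_iter; apply: linG_scal.
rewrite /rw linG_scal.
by rewrite (scal_foldl (F := fun h k0 => rc k0 h)) // => t; apply: linG_scal.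
Qed.

Lemma mulGZl k (f g : G) : mulG (k *: f) g = k *: mulG f g.
Proof.
rewrite /mulG scaler_sumr; apply: eq_bigr => b _.
by rewrite rmul_scal !scalerA mulrC.
Qed.

Lemma mulGZr k (f g : G) : mulG f (k *: g) = k *: mulG f g.
Proof.
rewrite /mulG scaler_sumr; apply: eq_bigr => b _.
by rewrite GZ scalerA.
Qed.

Lemma linG_delta (phi : basisG -> G) (b : basisG) : linG phi (deltaG R b) = phi b.
Proof.
rewrite /linG (bigD1 b) //= big1 ?addr0.
  by rewrite ffunE eqxx scale1r.
by move=> b' nb; rewrite ffunE (negbTE nb) scale0r.
Qed.

Lemma linG0 (phi : basisG -> G) : linG phi (0 : G) = 0.
Proof. by rewrite /linG big1 // => b _; rewrite ffunE scale0r. Qed.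

Lemma mulG_delta (f : G) (b : basisG) : mulG f (deltaG R b) = rmul_basis b f.
Proof.
rewrite /mulG (bigD1 b) //= big1 ?addr0.
  by rewrite ffunE eqxx scale1r.
by move=> b' nb; rewrite ffunE (negbTE nb) scale0r.
Qed.

Lemma mulG0r (f : G) : mulG f (0 : G) = 0.
Proof. by rewrite /mulG big1 // => b _; rewrite ffunE scale0r. Qed.

Lemma mulG0l (g : G) : mulG (0 : G) g = 0.
Proof. by rewrite -[X in mulG X _](scale0r (0:G)) mulGZl scale0r. Qed.

End Lin.


Local Open Scope ring_scope.
Local Open Scope ring_scope.

Section XS.
Variables (R : comPzRingType) (d l : nat) (hl : (0 < l)%N).
Local Notation G := (G R d l).
Local Notation basisG := (basisG d l).

Definition dX (mu : {ffun 'I_d -> nat}) : G :=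
  [ffun b : basisG => ((b.1.2 == 1%g) && (b.2 == [ffun=> false])
      && [forall i, (b.1.1 i : nat) == mu i])%:R].
Definition fitsX (mu : {ffun 'I_d -> nat}) := [forall i, (mu i < l)%N].
Definition mX (mu : {ffun 'I_d -> nat}) : {ffun 'I_d -> 'I_l} :=
  [ffun i => Ordinal (ltn_pmod (mu i) hl)].
Definition bX mu : basisG := (mX mu, 1%g, [ffun=> false]).

Lemma dXE mu : dX mu = if fitsX mu then deltaG R (bX mu) else 0.
Proof.
apply/ffunP => [[[m w] e]]; rewrite !ffunE /=.
case: ifP => fit.
  rewrite ffunE; congr ((nat_of_bool _)%:R).
  rewrite /bX !xpair_eqE.
  suff -> : [forall i, (m i : nat) == mu i] = (m == mX mu).
    by case: (m == mX mu); case: (w == 1%g); case: (e == _).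
  apply/forallP/eqP => [H|->]; last first.
    by move=> i; rewrite ffunE /= modn_small //; apply: (forallP fit).
  apply/ffunP => i; apply: val_inj; rewrite ffunE /= modn_small ?(eqP (H i)) //.
  exact: (forallP fit).
case: (boolP [forall i, _]) => H; last by rewrite andbF ffunE.
suff: fitsX mu by rewrite fit.
by apply/forallP => i; rewrite -(eqP (forallP H i)) ltn_ord.
Qed.

Lemma dX_nfit mu : ~~ fitsX mu -> dX mu = 0.
Proof. by rewrite dXE => /negbTE ->. Qed.

Definition addX (mu : {ffun 'I_d -> nat}) j : {ffun 'I_d -> nat} :=
  [ffun i => (mu i + (i == j))%N].

Lemma rx_dX j mu : rx j (dX mu) = dX (addX mu j).
Proof.
rewrite {1}dXE; case: ifP => fit; last first.
  rewrite /rx linG0 dX_nfit //; apply: contraFN fit => /forallP H.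
  by apply/forallP => i; have := H i; rewrite /addX ffunE; apply: leq_ltn_trans; rewrite leq_addr.
have fj : (mu j < l)%N := forallP fit j.
rewrite /rx linG_delta /= perm1 /incr_exp.
case: insubP => [n nlt nval|nlt].
  have nlt' : ((mu j).+1 < l)%N by move: nlt; rewrite /mX ffunE /= modn_small.
  rewrite ffunE expr0 scale1r dXE ifT; last first.
    apply/forallP => i; rewrite /addX ffunE; case: eqP => [->|_].
      by rewrite addn1.
    by rewrite addn0; exact: (forallP fit).
  congr (deltaG R (_, _, _)); apply/ffunP => i; apply: val_inj.
  rewrite /addX /mX !ffunE /=; case: eqP => [->|_] /=.
    by rewrite nval /mX ffunE /= !modn_small ?addn1.
  by rewrite addn0.
rewrite dX_nfit //; apply: contra nlt => /forallP H.
by have := H j; rewrite /addX /mX !ffunE eqxx /= modn_small ?addn1.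
Qed.

Definition zeroX : {ffun 'I_d -> nat} := [ffun=> 0%N].
Definition plusX (mu nu : {ffun 'I_d -> nat}) : {ffun 'I_d -> nat} :=
  [ffun i => (mu i + nu i)%N].

Lemma iter_rx_dX j k mu :
  iter k (rx j) (dX mu) = dX [ffun i => (mu i + (i == j) * k)%N].
Proof.
elim: k => [|k IH] /=.
  by congr dX; apply/ffunP => i; rewrite ffunE muln0 addn0.
rewrite IH rx_dX; congr dX; apply/ffunP => i; rewrite /addX !ffunE.
by rewrite mulnS [((i == j) + _)%N]addnC addnA.
Qed.

Lemma foldl_rx_dX (nu : 'I_d -> nat) s mu :
  foldl (fun h j => iter (nu j) (rx j) h) (dX mu) s =
  dX [ffun i => (mu i + \sum_(j <- s) (i == j) * nu j)%N].
Proof.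
elim: s mu => [|j s IH] mu /=.
  by congr dX; apply/ffunP => i; rewrite ffunE big_nil addn0.
rewrite iter_rx_dX IH; congr dX; apply/ffunP => i; rewrite !ffunE big_cons.
by rewrite addnA.
Qed.

Lemma sum_delta_enum (nu : 'I_d -> nat) i :
  (\sum_(j <- enum 'I_d) (i == j) * nu j)%N = nu i.
Proof.
rewrite big_enum /= (bigD1 i) //= eqxx mul1n big1 ?addn0 //.
by move=> j /negbTE; rewrite eq_sym => ->.
Qed.

Lemma filter_false (s : seq 'I_d) : [seq k <- s | [ffun=> false] k] = [::].
Proof. by rewrite (eq_filter (a2 := pred0)) ?filter_pred0 // => k; rewrite ffunE. Qed.

Lemma rw1_dX mu : rw 1%g (dX mu) = dX mu.
Proof.
rewrite {1}dXE; case: ifP => fit; last by rewrite /rw linG0 dX_nfit // fit.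
by rewrite /rw linG_delta /= filter_false /= mulg1 dXE fit.
Qed.

Lemma mulG_dX mu nu : mulG (dX mu) (dX nu) = dX (plusX mu nu).
Proof.
rewrite [dX nu]dXE; case: ifP => fit; last first.
  rewrite mulG0r dX_nfit //; apply: contraFN fit => /forallP H.
  apply/forallP => i; have := H i; rewrite /plusX ffunE; apply: leq_ltn_trans.
  by rewrite leq_addl.
rewrite mulG_delta /= filter_false /= foldl_rx_dX rw1_dX; congr dX.
apply/ffunP => i; rewrite !ffunE sum_delta_enum /mX ffunE /= modn_small //.
exact: (forallP fit).
Qed.

Lemma oneG_dX : oneG R d l = dX zeroX.
Proof.
apply/ffunP => b; rewrite !ffunE; congr ((nat_of_bool _)%:R).
have -> : [forall i, (b.1.1 i : nat) == zeroX i] = [forall i, (b.1.1 i : nat) == 0%N].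
  by apply: eq_forallb => i; rewrite ffunE.
by case: [forall i, _]; case: (b.1.2 == 1%g); case: (b.2 == _).
Qed.

Lemma xG_dX i : xG R l i = dX (addX zeroX i).
Proof. by rewrite /xG oneG_dX rx_dX. Qed.

Definition isX (f : G) := exists mu, f = dX mu.

Lemma isX_mul f g : isX f -> isX g -> isX (mulG f g).
Proof. by move=> [mu ->] [nu ->]; exists (plusX mu nu); rewrite mulG_dX. Qed.

Lemma isX_pow f n : isX f -> isX (powG f n).
Proof.
move=> Xf; elim: n => [|n IH] /=; first by exists zeroX; rewrite oneG_dX.
exact: isX_mul.
Qed.

Lemma isX_comm f g : isX f -> isX g -> mulG f g = mulG g f.
Proof.
move=> [mu ->] [nu ->]; rewrite !mulG_dX; congr dX.
by apply/ffunP => i; rewrite !ffunE addnC.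
Qed.

Lemma isX_assoc f g h : isX f -> isX g -> isX h ->
  mulG f (mulG g h) = mulG (mulG f g) h.
Proof.
move=> [mu ->] [nu ->] [ka ->]; rewrite !mulG_dX; congr dX.
by apply/ffunP => i; rewrite !ffunE addnA.
Qed.
End XS.


Local Open Scope ring_scope.
Local Open Scope ring_scope.

Section CS.
Variables (R : comPzRingType) (d l : nat) (hl : (0 < l)%N).
Local Notation G := (G R d l).
Local Notation basisG := (basisG d l).

Definition m0 : {ffun 'I_d -> 'I_l} := [ffun=> Ordinal hl].
Definition dC (e : {ffun 'I_d -> bool}) : G := deltaG R (m0, 1%g, e).
Definition xorC (e1 e2 : {ffun 'I_d -> bool}) : {ffun 'I_d -> bool} :=
  [ffun i => e1 i (+) e2 i].
Definition zeroC : {ffun 'I_d -> bool} := [ffun=> false].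
Definition delC (k : 'I_d) : {ffun 'I_d -> bool} := [ffun i => i == k].

Lemma oneG_dC : oneG R d l = dC zeroC.
Proof.
apply/ffunP => [[[m w] e]]; rewrite !ffunE /=; congr ((nat_of_bool _)%:R).
rewrite !xpair_eqE.
suff -> : [forall i, (m i : nat) == 0%N] = (m == m0) by [].
apply/forallP/eqP => [H|-> i]; last by rewrite ffunE.
by apply/ffunP => i; apply: val_inj; rewrite ffunE /= (eqP (H i)).
Qed.

Definition cntC (e : {ffun 'I_d -> bool}) (k : 'I_d) :=
  #|[pred j : 'I_d | (k < j)%N && e j]|.

Lemma rc_dC k e : rc k (dC e) = (- 1) ^+ cntC e k *: dC (xorC e (delC k)).
Proof.
rewrite /rc /dC linG_delta /=; congr (_ *: deltaG R (_, _, _)).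
apply/ffunP => i; rewrite !ffunE; case: eqP => [->|_]; last by rewrite addbF.
by rewrite addbT.
Qed.

Definition sgC e (ks : seq 'I_d) := (\sum_(k <- ks) cntC e k)%N.
Definition flipL e (ks : seq 'I_d) : {ffun 'I_d -> bool} := [ffun i => e i (+) (i \in ks)].

Lemma foldl_rc_dC ks e :
  sorted (fun a b : 'I_d => (a < b)%N) ks ->
  foldl (fun g k => rc k g) (dC e) ks = (- 1) ^+ sgC e ks *: dC (flipL e ks).
Proof.
elim: ks e => [|k ks IH] e /=.
  move=> _; rewrite /sgC big_nil expr0 scale1r; congr dC.
  by apply/ffunP => i; rewrite ffunE in_nil addbF.
move=> pth.
have allk : all (fun b : 'I_d => (k < b)%N) ks.
  by apply: order_path_min pth => x y z; apply: ltn_trans.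
have sks : sorted (fun a b : 'I_d => (a < b)%N) ks by apply: path_sorted pth.
rewrite rc_dC (scal_foldl (F := fun g k0 => rc k0 g)); last by move=> t; apply: linG_scal.
rewrite IH // scalerA -exprD; congr (_ ^+ _ *: dC _).
  rewrite /sgC big_cons; congr (_ + _)%N; apply: eq_big_seq => k' k'in.
  have kk' : (k < k')%N by exact: (allP allk).
  rewrite /cntC; apply: eq_card => j /=; rewrite !inE /xorC /delC !ffunE.
  case: (ltnP k' j) => //= kj; case: eqP => [ej|]; last by rewrite addbF.
  by move: kj; rewrite ej => /(ltn_trans kk'); rewrite ltnn.
apply/ffunP => i; rewrite !ffunE in_cons -addbA; congr (_ (+) _).
case: eqP => [->|_] /=; last by [].
suff -> : (k \in ks) = false by [].
apply/negP => kin; by have := allP allk k kin; rewrite ltnn.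
Qed.

Lemma sorted_enum_filter (p : pred 'I_d) :
  sorted (fun a b : 'I_d => (a < b)%N) [seq k <- enum 'I_d | p k].
Proof.
apply: sorted_filter; first by move=> x y z; apply: ltn_trans.
by have := iota_ltn_sorted 0 d; rewrite -val_enum_ord sorted_map.
Qed.

Lemma flipL_filter (e : {ffun 'I_d -> bool}) (p : pred 'I_d) : flipL e [seq k <- enum 'I_d | p k] = xorC e [ffun i => p i].
Proof. by apply/ffunP => i; rewrite !ffunE mem_filter mem_enum andbT. Qed.

Lemma sgC0 ks : sgC zeroC ks = 0%N.
Proof.
rewrite /sgC big1_seq // => k _; rewrite /cntC; apply: eq_card0 => j /=.
by rewrite !inE /zeroC ffunE andbF.
Qed.

Lemma foldl_ext (T S : Type) (f1 f2 : T -> S -> T) z s :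
  (forall g k, f1 g k = f2 g k) -> foldl f1 z s = foldl f2 z s.
Proof. by move=> H; elim: s z => //= k s IH z; rewrite H IH. Qed.

Lemma rw1_dC e : rw 1%g (dC e) = dC e.
Proof.
rewrite /rw /dC linG_delta /= mulg1.
rewrite (foldl_ext (f2 := fun g k => rc k g)); last by move=> g k; rewrite invg1 perm1.
rewrite -/(dC zeroC).
rewrite foldl_rc_dC ?sorted_enum_filter // sgC0 expr0 scale1r flipL_filter; congr dC.
by apply/ffunP => i; rewrite !ffunE.
Qed.

Lemma foldl_iter0 (f : G) (s : seq 'I_d) :
  foldl (fun h j => iter (m0 j) (rx j) h) f s = f.
Proof. by elim: s f => //= j s IH f; rewrite IH ffunE. Qed.

Definition Q (e1 e2 : {ffun 'I_d -> bool}) : R :=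
  \prod_(k : 'I_d) \prod_(j : 'I_d) (- 1) ^+ [&& e2 k, e1 j & (k < j)%N].

Lemma sgCQ (e1 e2 : {ffun 'I_d -> bool}) : (- 1) ^+ sgC e1 [seq k <- enum 'I_d | e2 k] = Q e1 e2.
Proof.
rewrite /sgC big_filter -prodrXr big_enum_cond /= big_mkcond /=.
apply: eq_bigr => k _; case: (e2 k) => /=; last first.
  by rewrite big1 // => j _; rewrite expr0.
rewrite /cntC -sum1_card -prodrXr big_mkcond /=; apply: eq_bigr => j _.
by rewrite !inE andbC; case: (_ && _).
Qed.

Lemma mulG_dC e1 e2 : mulG (dC e1) (dC e2) = Q e1 e2 *: dC (xorC e1 e2).
Proof.
rewrite {2}/dC mulG_delta /= foldl_iter0 rw1_dC foldl_rc_dC ?sorted_enum_filter //.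
rewrite sgCQ flipL_filter; congr (_ *: dC (xorC _ _)).
by apply/ffunP => i; rewrite ffunE.
Qed.

Lemma sign_xor (a b c t : bool) :
  (- 1) ^+ [&& c, a (+) b & t] = (- 1) ^+ [&& c, a & t] * (- 1) ^+ [&& c, b & t] :> R.
Proof. by case: a; case: b; case: c; case: t; rewrite /= ?expr0 ?expr1 ?mulr1 ?mul1r ?mulrNN ?mulr1. Qed.

Lemma sign_xor2 (a b c t : bool) :
  (- 1) ^+ [&& a (+) b, c & t] = (- 1) ^+ [&& a, c & t] * (- 1) ^+ [&& b, c & t] :> R.
Proof. by case: a; case: b; case: c; case: t; rewrite /= ?expr0 ?expr1 ?mulr1 ?mul1r ?mulrNN ?mulr1. Qed.

Lemma QxorL e1 e2 e3 : Q (xorC e1 e2) e3 = Q e1 e3 * Q e2 e3.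
Proof.
rewrite /Q -big_split; apply: eq_bigr => k _; rewrite -big_split; apply: eq_bigr => j _.
by rewrite ffunE sign_xor.
Qed.

Lemma QxorR e1 e2 e3 : Q e1 (xorC e2 e3) = Q e1 e2 * Q e1 e3.
Proof.
rewrite /Q -big_split; apply: eq_bigr => k _; rewrite -big_split; apply: eq_bigr => j _.
by rewrite ffunE sign_xor2.
Qed.

Lemma Q0l e : Q zeroC e = 1.
Proof.
rewrite /Q big1 // => k _; rewrite big1 // => j _.
by rewrite ffunE andbF /= expr0.
Qed.

Lemma Q0r e : Q e zeroC = 1.
Proof. by rewrite /Q big1 // => k _; rewrite big1 // => j _; rewrite ffunE /= expr0. Qed.

Lemma Qdel a b : Q (delC a) (delC b) = (- 1) ^+ (b < a)%N.
Proof.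
rewrite /Q (bigD1 b) //= [X in _ * X]big1 ?mulr1; last first.
  move=> k kb; rewrite big1 // => j _; rewrite ffunE (negbTE kb) /= expr0 //.
rewrite (bigD1 a) //= [X in _ * X]big1 ?mulr1; last first.
  by move=> j ja; rewrite !ffunE (negbTE ja) eqxx /= expr0.
by rewrite !ffunE !eqxx.
Qed.

Lemma xorCC e1 e2 : xorC e1 e2 = xorC e2 e1.
Proof. by apply/ffunP => i; rewrite !ffunE addbC. Qed.

Lemma xorCA e1 e2 e3 : xorC e1 (xorC e2 e3) = xorC (xorC e1 e2) e3.
Proof. by apply/ffunP => i; rewrite !ffunE addbA. Qed.

Lemma xorC0 e : xorC e zeroC = e.
Proof. by apply/ffunP => i; rewrite !ffunE addbF. Qed.

Lemma xor0C e : xorC zeroC e = e.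
Proof. by apply/ffunP => i; rewrite !ffunE. Qed.

Definition isC (f : G) := exists k e, f = k *: dC e.

Lemma mulG_C k1 k2 e1 e2 :
  mulG (k1 *: dC e1) (k2 *: dC e2) = (k1 * k2 * Q e1 e2) *: dC (xorC e1 e2).
Proof. by rewrite mulGZl mulGZr mulG_dC !scalerA ?mulrA. Qed.

Lemma isC_mul f g : isC f -> isC g -> isC (mulG f g).
Proof.
by move=> [k1 [e1 ->]] [k2 [e2 ->]]; rewrite mulG_C; exists (k1 * k2 * Q e1 e2), (xorC e1 e2).
Qed.

Lemma isC_assoc f g h : isC f -> isC g -> isC h ->
  mulG f (mulG g h) = mulG (mulG f g) h.
Proof.
move=> [k1 [e1 ->]] [k2 [e2 ->]] [k3 [e3 ->]]; rewrite !mulG_C xorCA.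
congr (_ *: _); rewrite QxorL QxorR.
set a := Q e1 e2; set b := Q e1 e3; set c := Q e2 e3.
ring.
Qed.

Lemma cG_dC i : cG R l i = dC (delC i).
Proof.
rewrite /cG oneG_dC rc_dC xor0C.
suff -> : cntC zeroC i = 0%N by rewrite expr0 scale1r.
by rewrite /cntC; apply: eq_card0 => j; rewrite !inE ffunE andbF.
Qed.

Lemma isC_one : isC (oneG R d l).
Proof. by exists 1, zeroC; rewrite oneG_dC scale1r. Qed.

Lemma isC_cG i : isC (cG R l i).
Proof. by exists 1, (delC i); rewrite cG_dC scale1r. Qed.

Lemma mulG1C f : isC f -> mulG (oneG R d l) f = f.
Proof.
move=> [k [e ->]]; rewrite oneG_dC -[dC zeroC]scale1r mulG_C Q0l xor0C.
by rewrite !mulr1 mul1r.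
Qed.

Lemma mulGC1 f : isC f -> mulG f (oneG R d l) = f.
Proof.
move=> [k [e ->]]; rewrite oneG_dC -[dC zeroC]scale1r mulG_C Q0r xorC0.
by rewrite !mulr1.
Qed.

Lemma cG_anti (a b : 'I_d) : a != b -> mulG (cG R l a) (cG R l b) = - 1 *: mulG (cG R l b) (cG R l a).
Proof.
move=> ab; rewrite !cG_dC !mulG_dC Qdel Qdel xorCC scalerA; congr (_ *: _).
case: (ltngtP a b) => [lab|lab|eab].
- by rewrite expr0 expr1 mulrN1 opprK.
- by rewrite expr0 expr1 mulr1.
- by move: ab; rewrite (val_inj eab) eqxx.
Qed.

End CS.


Local Open Scope ring_scope.
Local Open Scope ring_scope.

Section Rot.
Variables (R : comPzRingType) (d l : nat).
Local Notation G := (G R d l).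

Lemma prodG_closed (S : G -> Prop) (L : seq G) :
  (forall f g, S f -> S g -> S (mulG f g)) -> S (oneG R d l) ->
  (forall f, f \in L -> S f) -> S (prodG L).
Proof.
move=> Sm S1; elim: L => //= f L IH H; apply: Sm.
  by apply: H; rewrite inE eqxx.
by apply: IH => g gL; apply: H; rewrite inE gL orbT.
Qed.

Lemma prodG_rot (S : G -> Prop) (I : eqType) (F : I -> G) (k : I -> R) (y : G)
    (js : seq I) :
  (forall f g, S f -> S g -> S (mulG f g)) ->
  (forall f g h, S f -> S g -> S h -> mulG f (mulG g h) = mulG (mulG f g) h) ->
  S (oneG R d l) -> S y -> (forall j, S (F j)) ->
  (forall j, j \in js -> mulG y (F j) = k j *: mulG (F j) y) ->
  prodG (y :: map F js) = (\prod_(j <- js) k j) *: prodG (rcons (map F js) y).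
Proof.
move=> Sm Sa S1 Sy SF; elim: js => [|j js IH] H /=.
  by rewrite big_nil scale1r.
have SP : forall L : seq I, S (prodG (map F L)).
  move=> L; apply: prodG_closed => // f /mapP [j' _ ->]; exact: SF.
rewrite Sa //; rewrite H ?inE ?eqxx // mulGZl -Sa //.
have -> : mulG y (prodG [seq F i | i <- js]) = prodG (y :: map F js) by [].
rewrite IH; last by move=> j' j'in; apply: H; rewrite inE j'in orbT.
by rewrite mulGZr scalerA big_cons.
Qed.

Lemma powGZ (c : R) (f : G) m : powG (c *: f) m = c ^+ m *: powG f m.
Proof.
elim: m => [|m IH] /=; first by rewrite expr0 scale1r.
by rewrite IH mulGZl mulGZr scalerA exprS mulrC.
Qed.

Lemma prodGZ (I : Type) (c : I -> R) (F : I -> G) (s : seq I) :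
  prodG [seq c j *: F j | j <- s] = (\prod_(j <- s) c j) *: prodG [seq F j | j <- s].
Proof.
elim: s => [|j s IH] /=; first by rewrite big_nil scale1r.
by rewrite IH mulGZl mulGZr scalerA big_cons.
Qed.

End Rot.

Local Open Scope nat_scope.
Lemma iota_last_filter m : iota 0 m.+1 = rcons [seq x <- iota 0 m.+1 | x != m] m.
Proof.
rewrite -addn1 iotaD filter_cat /= add0n eqxx cats0 -cats1; congr (_ ++ _).
apply/esym/all_filterP/allP => x; rewrite mem_iota add0n => /andP [_ xm].
by rewrite neq_ltn xm.
Qed.

Lemma filter_iota_last m : [seq x <- iota 0 m.+1 | x != m] = iota 0 m.
Proof.
rewrite -addn1 iotaD filter_cat /= add0n eqxx cats0.
apply/all_filterP/allP => x; rewrite mem_iota add0n => /andP [_ xm].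
by rewrite neq_ltn xm.
Qed.

Lemma map_rot_iota m : [seq (x + m) %% m.+1 | x <- iota 0 m.+1] = m :: iota 0 m.
Proof.
rewrite /= add0n modn_small //.
have -> : iota 1 m = [seq 1 + i | i <- iota 0 m] by rewrite -iotaDl.
rewrite -map_comp; congr (_ :: _); rewrite -[in RHS](map_id (iota 0 m)).
apply/eq_in_map => x; rewrite mem_iota add0n => /andP [_ xm] /=.
by rewrite addnC addnA addn1 modnDl modn_small // ltnS ltnW.
Qed.

Lemma nth_rotr1 (T : Type) (x0 : T) (s : seq T) i :
  (0 < size s)%N -> (i < size s)%N ->
  nth x0 (rotr 1 s) i = nth x0 s ((i + (size s).-1) %% size s).
Proof.
case/lastP: s => // t z _; rewrite rotr1_rcons size_rcons /= => ilt.
rewrite nth_rcons; case: i ilt => [|i] ilt /=.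
  by rewrite add0n modn_small // ltnn eqxx.
rewrite addSn -addnS modnDr.
by rewrite ltnS in ilt; rewrite modn_small ?ilt // ltnW.
Qed.

Section PowZ.
Variables (R : comPzRingType) (d l : nat).
Lemma prodG_powZ (I : Type) (c : I -> R) (f : I -> 'I_d) (m : I -> nat) (s : seq I) :
  prodG [seq powG (c j *: xG R l (f j)) (m j) | j <- s] =
  (\prod_(j <- s) c j ^+ m j) *: prodG [seq powG (xG R l (f j)) (m j) | j <- s].
Proof.
rewrite -prodGZ; congr prodG; apply: eq_map => j; exact: powGZ.
Qed.
End PowZ.


Local Open Scope ring_scope.
Local Open Scope ring_scope.

Section Main.
Variables (R : comPzRingType) (d l : nat) (hl : (0 < l)%N) (A : seq 'I_d) (r : nat).
Hypotheses (uA : uniq A) (Apos : (0 < size A)%N).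
Local Notation A' := (rotr 1 A).
Local Notation a := (size A).
Local Notation n := (size A).-1.

Lemma sA : size A' = a. Proof. exact: size_rotr. Qed.
Lemma Apos' : (0 < size A')%N. Proof. by rewrite sA. Qed.
Lemma an : a = n.+1. Proof. by rewrite prednK. Qed.
Lemma nlt : (n < a)%N. Proof. by rewrite ltn_predL. Qed.

Definition rho (j : 'I_(size A')) : 'I_(size A) := Ordinal (ltn_pmod (j + n) Apos).
Definition sig (j : 'I_(size A)) : 'I_(size A') := Ordinal (ltn_pmod (j + 1) Apos').
Definition jn : 'I_a := Ordinal nlt.
Definition js := [seq j <- enum 'I_a | j != jn].

Lemma rhoK : cancel rho sig.
Proof.
move=> j; apply: val_inj => /=; move: (j : nat) (ltn_ord j) => i; rewrite sA => jlt.
by rewrite modnDml -addnA addn1 -an modnDr modn_small.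
Qed.

Lemma sigK : cancel sig rho.
Proof.
move=> j; apply: val_inj => /=; rewrite sA.
by rewrite modnDml -addnA add1n -an modnDr modn_small.
Qed.

Lemma rho_bij : bijective rho. Proof. by exists sig; [exact: rhoK|exact: sigK]. Qed.
Lemma sig_bij : bijective sig. Proof. by exists rho; [exact: sigK|exact: rhoK]. Qed.

Lemma valsig (j : 'I_a) : (sig j : nat) = if j == jn then 0%N else (j.+1)%N.
Proof.
rewrite /= sA; case: eqP => [->|njn] /=; first by rewrite addn1 -an modnn.
have jn' : (j : nat) != n by apply/eqP => e; apply: njn; apply: val_inj.
rewrite modn_small ?addn1 //; move: (ltn_ord j) jn' Apos; move: (j : nat) => i; lia.
Qed.

Lemma valrho (j : 'I_(size A')) :
  (rho j : nat) = if (j : nat) == 0%N then n else (j : nat).-1.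
Proof.
rewrite /=; move: (j : nat) (ltn_ord j) => i; rewrite sA; case: i => [|i] ilt /=.
  by rewrite add0n modn_small // ltn_predL.
by rewrite addSn -addnS -an modnDr modn_small // ltnW.
Qed.

Lemma map_val_js : map val js = iota 0 n.
Proof.
rewrite /js (eq_filter (a2 := preim val (fun x => x != n))); last first.
  by move=> j /=.
by rewrite -filter_map val_enum_ord -(filter_iota_last n) -an.
Qed.

Lemma enum_rcons : enum 'I_a = rcons js jn.
Proof.
apply: (inj_map val_inj); rewrite map_rcons val_enum_ord map_val_js /=.
by rewrite {1}an -addn1 iotaD cats1.
Qed.

Lemma map_rho : map rho (enum 'I_(size A')) = jn :: js.
Proof.
apply: (inj_map val_inj); transitivity (n :: map val js); last by [].
rewrite map_val_js -map_comp.
rewrite (eq_map (g := (fun x => (x + n) %% a)%N \o val)) // map_comp val_enum_ord sA.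
by rewrite -map_rot_iota -an.
Qed.

Lemma tnth_rot (j : 'I_(size A')) : tnth (in_tuple A') j = tnth (in_tuple A) (rho j).
Proof.
have x0 : 'I_d := tnth (in_tuple A) jn.
rewrite !(tnth_nth x0) nth_rotr1 //.
by move: (j : nat) (ltn_ord j) => i; rewrite sA.
Qed.

Definition h_al (al : {ffun 'I_a -> bool}) : {ffun 'I_(size A') -> bool} :=
  [ffun j => al (rho j)].
Definition g_al (al : {ffun 'I_(size A') -> bool}) : {ffun 'I_a -> bool} :=
  [ffun j => al (sig j)].

Lemma h_bij : bijective h_al.
Proof.
exists g_al => al; apply/ffunP => j; rewrite !ffunE; [by rewrite sigK | by rewrite rhoK].
Qed.

Lemma absZ2_h al : absZ2 (h_al al) = absZ2 al.
Proof.
rewrite /absZ2 [RHS](reindex rho) /=; last exact: onW_bij rho_bij.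
by apply: eq_bigr => j _; rewrite ffunE.
Qed.

Lemma absZ2_split (al : {ffun 'I_a -> bool}) :
  absZ2 al = (al jn + \sum_(j | j != jn) al j)%N.
Proof. by rewrite /absZ2 (bigD1 jn). Qed.

Lemma sumj_h al : (\sum_(j < size A') j.+1 * h_al al j)%N =
  (al jn + \sum_(j | j != jn) j.+1 * al j + \sum_(j | j != jn) al j)%N.
Proof.
rewrite (reindex sig); last exact: onW_bij sig_bij.
rewrite (bigD1 jn) // valsig eqxx ffunE sigK mul1n -addnA -big_split.
congr (_ + _)%N; apply: eq_bigr => j njn.
by rewrite valsig (negbTE njn) ffunE sigK mulSn addnC.
Qed.

Lemma sumj (al : {ffun 'I_a -> bool}) : (\sum_(j < a) j.+1 * al j)%N =
  (a * al jn + \sum_(j | j != jn) j.+1 * al j)%N.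
Proof. by rewrite (bigD1 jn) //= -an. Qed.

Lemma epsE (B : seq 'I_d) (al : {ffun 'I_(size B) -> bool}) j :
  epsA R al j = (- 1) ^+ (\sum_(k < size B | (k < j)%N) al k)%N.
Proof. by rewrite /epsA prodrXr. Qed.

Lemma eps_h al : ~~ odd (absZ2 al) -> forall j,
  epsA R (h_al al) j = (- 1) ^+ al jn * epsA R al (rho j).
Proof.
move=> ev j; rewrite !epsE -exprD -[LHS]signr_odd -[RHS]signr_odd.
congr (_ ^+ (nat_of_bool _)).
rewrite (reindex sig); last exact: onW_bij sig_bij.
rewrite (eq_bigr (fun k : 'I_a => nat_of_bool (al k))); last by move=> k _; rewrite ffunE sigK.
have [j0|jpos] := eqVneq (j : nat) 0%N.
  rewrite big_pred0; last by move=> k; rewrite j0 ltn0.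
  rewrite (eq_bigl (fun k => k != jn)); last first.
    move=> k; rewrite valrho j0 /= -val_eqE /=.
    by move: (ltn_ord k) Apos; move: (k : nat) => i; lia.
  by rewrite -absZ2_split (negbTE ev).
rewrite (bigD1 jn); last by rewrite valsig eqxx lt0n.
congr (odd (_ + _)); apply: eq_bigl => k.
rewrite valsig valrho (negbTE jpos); case: eqP => [->|nk] /=.
  by rewrite andbF; move: (ltn_ord j) Apos; move: (j : nat) => i; rewrite sA; lia.
have : (k : nat) != n by apply/eqP => e; apply: nk; apply: val_inj.
by rewrite andbT; move: (ltn_ord j) (ltn_ord k) Apos;
  move: (j : nat) (k : nat) => i i'; rewrite sA; lia.
Qed.

Definition N := (n * l.-1 + r)%N.
Lemma EN : N.+1 = ((size A').-1 * l.-1 + r).+1.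
Proof. by rewrite /N sA. Qed.

Definition ht (t : {ffun 'I_a -> 'I_N.+1}) : {ffun 'I_(size A') -> 'I_((size A').-1 * l.-1 + r).+1} :=
  [ffun j => cast_ord EN (t (rho j))].
Definition gt (t : {ffun 'I_(size A') -> 'I_((size A').-1 * l.-1 + r).+1}) : {ffun 'I_a -> 'I_N.+1} :=
  [ffun j => cast_ord (esym EN) (t (sig j))].

Lemma ht_bij : bijective ht.
Proof.
exists gt => t; apply/ffunP => j; rewrite !ffunE.
  by rewrite sigK cast_ordK.
by rewrite rhoK cast_ordKV.
Qed.

Lemma prodG_rot_X (P : 'I_a -> G R d l) : (forall j, isX (P j)) ->
  prodG [seq P j | j <- jn :: js] = prodG [seq P j | j <- enum 'I_a].
Proof.
move=> XP; have -> : [seq P j | j <- jn :: js] = P jn :: [seq P j | j <- js] by [].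
rewrite (prodG_rot (S := @isX R d l) (k := fun _ => 1)) //.
- by rewrite big1_seq ?scale1r // -map_rcons -enum_rcons.
- by move=> f g; apply: isX_mul.
- by move=> f g h; apply: isX_assoc.
- by exists (zeroX d); rewrite oneG_dX.
- by move=> j _; rewrite scale1r; apply: isX_comm.
Qed.

Lemma sum_ht t : (\sum_(j < size A') (ht t j : nat))%N = (\sum_(j < a) t j)%N.
Proof.
rewrite [RHS](reindex rho); last exact: onW_bij rho_bij.
by apply: eq_bigr => j _; rewrite ffunE.
Qed.

Lemma perm_enum : perm_eq (jn :: js) (enum 'I_a).
Proof. by rewrite enum_rcons perm_sym perm_rcons perm_refl. Qed.

Lemma hA_h al : ~~ odd (absZ2 al) ->
  hA R l r (h_al al) = (- 1) ^+ (al jn * N) *: hA R l r al.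
Proof.
move=> ev; rewrite /hA.
rewrite (reindex ht); last exact: onW_bij ht_bij.
rewrite scaler_sumr; apply: eq_big => t.
  by rewrite sum_ht sA.
move=> /eqP; rewrite sum_ht -/N => tN.
rewrite !prodG_powZ scalerA; congr (_ *: _).
  pose G j := ((- 1) ^+ al jn * epsA R al j) ^+ t j : R.
  transitivity (\prod_(j <- map rho (enum 'I_(size A'))) G j).
    by rewrite big_map; apply: eq_bigr => j' _; rewrite eps_h // ffunE.
  rewrite map_rho (perm_big _ perm_enum) /G.
  rewrite (eq_bigr (fun j => (- 1) ^+ (al jn * t j) * epsA R al j ^+ t j)); last first.
    by move=> j _; rewrite exprMn -exprM.
  rewrite big_split /= prodrXr -big_distrr /= big_enum /= tN.
  by rewrite sA.
rewrite (eq_map (g := (fun j => powG (xG R l (tnth (in_tuple A) j)) (t j)) \o rho)); last first.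
  by move=> j' /=; rewrite ffunE tnth_rot.
rewrite map_comp map_rho prodG_rot_X // => j.
by apply: (isX_pow hl); rewrite (xG_dX R hl); eexists.
Qed.

Lemma tnth_inj (i j : 'I_a) : tnth (in_tuple A) i = tnth (in_tuple A) j -> i = j.
Proof. have /tuple_uniqP inj : uniq (in_tuple A) by []. exact: inj. Qed.

Lemma calpha_h al : ~~ odd (absZ2 al) ->
  calpha R l (h_al al) = (- 1) ^+ al jn *: calpha R l al.
Proof.
move=> ev; rewrite /calpha.
pose Fc := fun j : 'I_a => if al j then cG R l (tnth (in_tuple A) j) else oneG R d l.
have isCF : forall j, isC hl (Fc j).
  by move=> j; rewrite /Fc; case: (al j); [exact: isC_cG | exact: isC_one].
rewrite (eq_map (g := Fc \o rho)); last by move=> j'; rewrite /= ffunE tnth_rot.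
rewrite map_comp map_rho.
have -> : [seq Fc j | j <- jn :: js] = Fc jn :: [seq Fc j | j <- js] by [].
rewrite (prodG_rot (S := isC hl) (k := fun j => if al jn && al j then - 1 else 1)) //.
- rewrite -map_rcons -enum_rcons; congr (_ *: _).
  case hjn: (al jn) => /=.
    rewrite (eq_bigr (fun j => (- 1) ^+ al j)); last by move=> j _; case: (al j).
    rewrite prodrXr big_filter big_enum_cond /= -signr_odd.
    have := ev; rewrite absZ2_split hjn.
    set S := (\sum_(j | j != jn) al j)%N.
    by move=> H; have -> : odd S = true by move: H; lia.
  by rewrite big1_seq ?expr0.
- by move=> f g; apply: isC_mul.
- by move=> f g h; apply: isC_assoc.
- exact: isC_one.
- move=> j; rewrite mem_filter => /andP [njn _].
  rewrite /Fc; case: (al jn); case: (al j) => /=.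
  + apply: (cG_anti R hl); apply/eqP => e.
    have ej := tnth_inj e.
    by move: njn; rewrite ej eqxx.
  + by rewrite scale1r mulGC1 ?mulG1C //; apply: isC_cG.
  + by rewrite scale1r mulGC1 ?mulG1C //; apply: isC_cG.
  + by rewrite scale1r mulGC1 ?mulG1C //; apply: isC_one.
Qed.

Lemma sigma_h : sigmaA A' = sigmaA A.
Proof.
by apply/permP => x; rewrite !permE /cyc_fun rotr_uniq uA next_rotr.
Qed.

Lemma term_gen (t1 t2 s1 s2 : R) (H1 H2 C1 C2 W1 W2 : G R d l) :
  H1 = s1 *: H2 -> C1 = s2 *: C2 -> W1 = W2 -> t1 * (s2 * s1) = t2 ->
  t1 *: mulG (mulG H1 W1) C1 = t2 *: mulG (mulG H2 W2) C2.
Proof.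
move=> -> -> -> <-; rewrite mulGZr mulGZl mulGZl !scalerA.
by rewrite mulrA.
Qed.

Lemma mainA : ~~ odd (n * l + r) -> Ar R l A' r = Ar R l A r.
Proof.
move=> cond; rewrite /Ar (reindex h_al); last exact: onW_bij h_bij.
set LL := (X in X = _).
rewrite /LL; apply: eq_big => [al|al ev]; first by rewrite absZ2_h.
rewrite /Aralpha; apply: term_gen.
- by apply: hA_h; rewrite -absZ2_h.
- by apply: calpha_h; rewrite -absZ2_h.
- by rewrite sigma_h.
have ev' : ~~ odd (absZ2 al) by rewrite -absZ2_h.
rewrite /tauA absZ2_h sumj_h sumj -!exprD -[LHS]signr_odd -[RHS]signr_odd.
congr (_ ^+ (nat_of_bool _)).
have sp := absZ2_split al.
move: ev' cond; rewrite /N -(prednK hl) mulnS.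
have := an; case: (al jn) sp => /= sp; lia.
Qed.

End Main.


Theorem mainTheorem4 (R : comPzRingType) (l d : nat) (hl : (1 <= l)%N) (hd : (1 <= d)%N)
  (A : seq 'I_d) (r : nat) :
  uniq A -> (0 < size A)%N -> ~~ odd ((size A).-1 * l + r) ->
  Ar R l (rotr 1 A) r = Ar R l A r.
Proof.
move=> uA Apos cond; exact: (@mainA R d l hl A r uA Apos cond).
Qed.
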